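(* Let $V$ be a real vector space with a symplectic form $\sigma$, $\mu$ a finitely additive probability measure on the lattice $\mathcal{L}(V)$ of all linear subspaces of $V$, and $K,H\in\mathcal{L}(V)$ symplectic planes. Then $\mu(K)=\mu(H)$.
   Context: A symplectic form is a bilinear, antisymmetric, non-degenerate map $\sigma:V\times V\to\mathbb{R}$. For a subspace $H$, $H'=\{v\in V:\sigma(v,h)=0\ \forall h\in H\}$. $\mathcal{L}(V)$ is ordered by inclusion, with $H\vee K=H+K$, $H\wedge K=H\cap K$, $0=\{0\}$, $1=V$. $H,K$ are separated if $H\subset K'$. A symplectic plane is a two-dimensional subspace $H$ with $H\cap H'=\{0\}$. A finitely additive probability measure on $\mathcal{L}(V)$ is a map $\mu$ into $[0,1]$ with $\mu(\{0\})=0$, $\mu(V)=1$, monotone, and $\mu(H_1+\dots+H_n)=\sum_k\mu(H_k)$ whenever $H_1,\dots,H_n$ are pairwise separated. *)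

(* Defs.v *)
From HB Require Import structures.
From mathcomp Require Import all_boot all_order all_algebra.
From mathcomp Require Import boolp classical_sets reals.
Set Implicit Arguments. Unset Strict Implicit. Unset Printing Implicit Defensive.
Import Order.TTheory GRing.Theory Num.Theory.
Local Open Scope ring_scope.
Local Open Scope classical_set_scope.

Section Symplectic.
Variables (R : realType) (V : lmodType R).

Definition symplectic_form (s : V -> V -> R) : Prop :=
  [/\ (forall (a : R) (u v w : V), s (a *: u + v) w = a * s u w + s v w),
      (forall (a : R) (u v w : V), s w (a *: u + v) = a * s w u + s w v),
      (forall u v : V, s u v = - s v u) &
      (forall u : V, (forall v : V, s u v = 0) -> u = 0)].

Definition subspace (H : set V) : Prop :=
  H 0 /\ forall (a : R) (u v : V), H u -> H v -> H (a *: u + v).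

Definition orth (s : V -> V -> R) (H : set V) : set V :=
  [set v | forall h, H h -> s v h = 0].

Definition separated (s : V -> V -> R) (H K : set V) : Prop := H `<=` orth s K.

Definition sumsp (H K : set V) : set V :=
  [set v | exists h k, [/\ H h, K k & v = h + k]].

Definition bigsumsp (l : seq (set V)) : set V := foldr sumsp [set 0] l.

Definition two_dim (H : set V) : Prop :=
  exists u w : V,
    (forall a b : R, a *: u + b *: w = 0 -> a = 0 /\ b = 0) /\
    H = [set v | exists a b : R, v = a *: u + b *: w].

Definition symplectic_plane (s : V -> V -> R) (H : set V) : Prop :=
  subspace H /\ two_dim H /\ H `&` orth s H = [set 0].

(* finitely additive probability measure on L(V); mu is only constrained
   on subspaces (its values on other sets are irrelevant). *)
Definition fa_prob_measure (s : V -> V -> R) (mu : set V -> R) : Prop :=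
  [/\ (forall H, subspace H -> 0 <= mu H <= 1),
      mu [set 0] = 0,
      mu [set: V] = 1,
      (forall H K, subspace H -> subspace K -> H `<=` K -> mu H <= mu K) &
      (forall l : seq (set V),
          (forall i, (i < size l)%N -> subspace (nth set0 l i)) ->
          (forall i j, (i < size l)%N -> (j < size l)%N -> i <> j ->
              separated s (nth set0 l i) (nth set0 l j)) ->
          mu (bigsumsp l) = \sum_(H <- l) mu H)].

End Symplectic.

(* Main.v *)
Require Import Defs.
From HB Require Import structures.
From mathcomp Require Import all_boot all_order all_algebra.
From mathcomp Require Import boolp classical_sets reals.
From mathcomp Require Import ring lra.
Import Order.TTheory GRing.Theory Num.Theory.
Local Open Scope ring_scope.
Local Open Scope classical_set_scope.
Set Implicit Arguments. Unset Strict Implicit.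

Section Aux.
Variables (R : realType) (V : lmodType R) (s : V -> V -> R).
Hypothesis hs : symplectic_form s.

Definition sp2 (u v : V) : set V := [set x | exists a b : R, x = a *: u + b *: v].
Definition F3 (u p q : V) (a b c : R) : V := a *: u + b *: p + c *: q.
Definition W3 (u p q : V) : set V := [set x | exists a b c, x = F3 u p q a b c].

Lemma F3D u p q a b c a' b' c' :
  F3 u p q a b c + F3 u p q a' b' c' = F3 u p q (a+a') (b+b') (c+c').
Proof.
rewrite /F3 addrACA [X in X + _ = _]addrACA.
by rewrite !scalerDl.
Qed.

Lemma F3Z u p q k a b c : k *: F3 u p q a b c = F3 u p q (k*a) (k*b) (k*c).
Proof. by rewrite /F3 !scalerDr !scalerA. Qed.

Lemma F30 u p q a b : a *: u + b *: p = F3 u p q a b 0.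
Proof. by rewrite /F3 scale0r addr0. Qed.

Lemma F3sw u p q a b c : F3 u p q a b c = F3 u q p a c b.
Proof. by rewrite /F3 addrAC. Qed.

Lemma F3c u p q a b c a' b' c' : a = a' -> b = b' -> c = c' ->
  F3 u p q a b c = F3 u p q a' b' c'.
Proof. by move=> -> -> ->. Qed.

Lemma s0l w : s 0 w = 0.
Proof.
case: hs => hl _ _ _; have := hl 1 0 0 w.
rewrite scale1r addr0 mul1r => h; lra.
Qed.

Lemma s0r w : s w 0 = 0.
Proof.
case: hs => _ hr _ _; have := hr 1 0 0 w.
rewrite scale1r addr0 mul1r => h; lra.
Qed.

Lemma sDl u v w : s (u + v) w = s u w + s v w.
Proof. case: hs => hl _ _ _; have := hl 1 u v w; by rewrite scale1r mul1r. Qed.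

Lemma sDr u v w : s w (u + v) = s w u + s w v.
Proof. case: hs => _ hr _ _; have := hr 1 u v w; by rewrite scale1r mul1r. Qed.

Lemma sZl a u w : s (a *: u) w = a * s u w.
Proof. case: hs => hl _ _ _; have := hl a u 0 w; by rewrite addr0 s0l addr0. Qed.

Lemma sZr a u w : s w (a *: u) = a * s w u.
Proof. case: hs => _ hr _ _; have := hr a u 0 w; by rewrite addr0 s0r addr0. Qed.

Lemma ssym u v : s u v = - s v u.
Proof. by case: hs. Qed.

Lemma sxx u : s u u = 0.
Proof. have := ssym u u; lra. Qed.

Lemma sF3l u p q a b c w :
  s (F3 u p q a b c) w = a * s u w + b * s p w + c * s q w.
Proof. by rewrite /F3 !sDl !sZl. Qed.

Lemma sp2_sub u v : subspace (sp2 u v).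
Proof.
split; first by exists 0, 0; rewrite !scale0r addr0.
move=> a x y [x1 [x2 ->]] [y1 [y2 ->]]; exists (a*x1+y1), (a*x2+y2).
rewrite !(F30 _ _ u) F3Z F3D; apply: F3c; ring.
Qed.

Lemma sp2C u v : sp2 u v = sp2 v u.
Proof.
by apply/seteqP; split => x [a [b ->]]; exists b, a; rewrite addrC.
Qed.

Lemma keyG (mu : set V -> R) u p q r (x1 x2 x3 : R) :
  fa_prob_measure s mu -> s r u = 0 -> s r p = 0 -> x3 != 0 ->
  r = F3 u p q x1 x2 x3 ->
  mu (sp2 r r) + mu (sp2 u p) = mu (W3 u p q).
Proof.
move=> [_ _ _ _ hadd] hru hrp hx3 hr.
have := hadd [:: sp2 r r; sp2 u p].
rewrite big_cons big_cons big_nil addr0 => <-.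
- rewrite /bigsumsp /=; congr mu.
  apply/seteqP; split => x.
  + case=> h [k [[c1 [c2 ->]] [h' [z [[d1 [d2 ->]] zz ->]]] ->]].
    rewrite zz addr0 hr (F30 u p q d1 d2) !F3Z !F3D.
    by do 3 eexists.
  + case=> a [b [c ->]].
    exists ((c/x3) *: r + 0 *: r),
      ((a - c/x3*x1)*:u + (b - c/x3*x2)*:p + 0).
    split; first by exists (c/x3), 0.
    * exists ((a - c/x3*x1)*:u + (b - c/x3*x2)*:p), 0; split => //.
      by do 2 eexists.
    * rewrite addr0 scale0r addr0 hr (F30 _ _ q) F3Z F3D; apply: F3c; (field; exact: hx3).
- by case=> [|[|i]] //= _; apply: sp2_sub.
- move=> [|[|i]] [|[|j]] //= _ _ _.
  + move=> x [c1 [c2 ->]] y [d1 [d2 ->]].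
    rewrite !sDl !sZl !sDr !sZr hru hrp; ring.
  + move=> x [d1 [d2 ->]] y [c1 [c2 ->]].
    rewrite !sDl !sZl !sDr !sZr (ssym u r) (ssym p r) hru hrp; ring.
Qed.

Lemma W3sw u p q : W3 u q p = W3 u p q.
Proof.
by apply/seteqP; split => x [a [b [c ->]]]; exists a, c, b; rewrite F3sw.
Qed.

Lemma M2 (mu : set V -> R) u p q : fa_prob_measure s mu ->
  s u p != 0 -> s u q != 0 -> mu (sp2 u p) = mu (sp2 u q).
Proof.
move=> hmu hp hq.
pose r := F3 u p q (- s p q) (s u q) (- s u p).
have hru : s r u = 0 by rewrite sF3l sxx (ssym p u) (ssym q u); ring.
have hrp : s r p = 0 by rewrite sF3l sxx (ssym q p); ring.
have hrq : s r q = 0 by rewrite sF3l sxx; ring.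
have h3 : - s u p != 0 by rewrite oppr_eq0.
have h1 := @keyG mu u p q r (- s p q) (s u q) (- s u p) hmu hru hrp h3 erefl.
have h2 := @keyG mu u q p r (- s p q) (- s u p) (s u q) hmu hru hrq hq
  (F3sw u p q _ _ _).
rewrite W3sw in h2.
lra.
Qed.

Lemma plane_sp2 K : symplectic_plane s K -> exists e f, s e f != 0 /\ K = sp2 e f.
Proof.
case=> _ [[u [w [hind ->]]] hcap]; exists u, w; split => //.
apply/eqP => h0.
have : (sp2 u w `&` orth s (sp2 u w)) u.
  split; first by exists 1, 0; rewrite scale1r scale0r addr0.
  by move=> y [a [b ->]]; rewrite sDr !sZr sxx h0; ring.
rewrite hcap => /= hu.
have := hind 1 0; rewrite scale1r scale0r addr0 => /(_ hu) [h _].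
by move: (@oner_neq0 R); rewrite h eqxx.
Qed.

Lemma pick3 (c al de d : R) : c != 0 -> d != 0 ->
  exists l, c + l * al != 0 /\ de + l * d != 0.
Proof.
move=> hc hd.
case: (eqVneq de 0) => [->|hde]; last by exists 0; rewrite !mul0r !addr0.
case: (eqVneq (c + al) 0) => ha.
  exists 2; split; first by apply: contra_neq hc => h; lra.
  by apply: contra_neq hd => h; lra.
by exists 1; rewrite !mul1r add0r.
Qed.

End Aux.

Theorem lemmaB2 (R : realType) (V : lmodType R) (s : V -> V -> R)
  (mu : set V -> R) (K H : set V) :
  symplectic_form s -> fa_prob_measure s mu ->
  symplectic_plane s K -> symplectic_plane s H ->
  mu K = mu H.
Proof.
move=> hs hmu /(plane_sp2 hs) [e [f [hef ->]]] /(plane_sp2 hs) [g [h [hgh ->]]].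
have [l [h1 h2]] := pick3 (s e g) (s f h) hef hgh.
pose y := f + l *: g.
have hey : s e y != 0 by rewrite /y sDr // sZr.
have hyh : s y h != 0 by rewrite /y sDl // sZl.
rewrite (M2 hs hmu hef hey) (sp2C e y).
have hye : s y e != 0 by rewrite (ssym hs) oppr_eq0.
rewrite (M2 hs hmu hye hyh) (sp2C y h).
have hhy : s h y != 0 by rewrite (ssym hs) oppr_eq0.
have hhg : s h g != 0 by rewrite (ssym hs) oppr_eq0.
by rewrite (M2 hs hmu hhy hhg) (sp2C h g).
Qed.
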